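(* Property (A) holds if and only if there exists a map $M\colon\mathbb R^n\to\mathbb R^{n\times n}$ such that $f(z)=M(z)\eta(z)$ and $M(z)\preceq 0$ for all $z\in\mathbb R^n$. Moreover, property (A) holds if all of the following hold: - $f$ and $\eta$ are continuously differentiable; - $\eta\colon\mathbb R^n\to\mathbb R^n$ is bijective; - $f(\eta^{-1}(0))=0$; - $D\eta(z)$ is invertible for all $z\in\mathbb R^n$; - $Df(z)\,D\eta(z)^{-1}\preceq 0$ for all $z\in\mathbb R^n$.
   Context: Setting. Let $n,m$ be positive integers. Let $\mathcal H\colon\mathbb R^n\to\mathbb R$ be continuously differentiable with $\mathcal H\ge 0$, and set $\eta\coloneq\nabla\mathcal H\colon\mathbb R^n\to\mathbb R^n$. Let $f\colon\mathbb R^n\to\mathbb R^n$ and $B\colon\mathbb R^n\to\mathbb R^{n\times m}$. Consider the system $\dot z = f(z)+B(z)u$, $y=B(z)^{\mathsf T}\eta(z)$. Notation. For a square matrix $A$ (not necessarily symmetric), $A\preceq 0$ means $x^{\mathsf T}Ax\le 0$ for all $x\in\mathbb R^n$. $Dg(z)$ denotes the Jacobian of $g$ at $z$. Property (A): there exist maps $J,R\colon\mathbb R^n\to\mathbb R^{n\times n}$ such that, for all $z\in\mathbb R^n$, $J(z)=-J(z)^{\mathsf T}$, $R(z)=R(z)^{\mathsf T}$ is positive semidefinite, and $f(z)=(J(z)-R(z))\eta(z)$. *)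

(* Defs.v *)
(* Vectors of R^n are row vectors 'rV[R]_n
   (the convention of the library's Jacobian 'J); column-vector identities of the
   paper are written with explicit transposes. *)
From HB Require Import structures.
From mathcomp Require Import all_boot all_order all_algebra.
From mathcomp Require Import all_classical all_reals.
From mathcomp Require Import topology normedtype derive.
Set Implicit Arguments. Unset Strict Implicit. Unset Printing Implicit Defensive.
Import Order.TTheory GRing.Theory Num.Theory.
Import numFieldNormedType.Exports.
Local Open Scope ring_scope.

(* A ⪯ 0 : x^T A x <= 0 for all x (A not necessarily symmetric). *)
Definition nsd (R : realType) (n : nat) (A : 'M[R]_n) : Prop :=
  forall x : 'cV[R]_n, (x^T *m A *m x) 0 0 <= 0.

(* A positive semidefinite (symmetry imposed separately). *)
Definition psd (R : realType) (n : nat) (A : 'M[R]_n) : Prop :=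
  forall x : 'cV[R]_n, 0 <= (x^T *m A *m x) 0 0.

Definition gradient (R : realType) (n : nat) (H : 'rV[R]_n -> R) (z : 'rV[R]_n)
  : 'rV[R]_n := \row_i ('d H z (delta_mx 0 i)).

(* The (usual, column-convention) Jacobian matrix Dg(z): entry (i,j) = d g_i / d z_j.
   The library's 'J g z is its transpose (row-vector convention). *)
Definition Jac (R : realType) (n : nat) (g : 'rV[R]_n -> 'rV[R]_n) (z : 'rV[R]_n)
  : 'M[R]_n := ('J g z)^T.

Definition C1_scalar (R : realType) (n : nat) (H : 'rV[R]_n -> R) : Prop :=
  (forall z, differentiable H z) /\ continuous (gradient H).

Definition C1_map (R : realType) (n : nat) (g : 'rV[R]_n -> 'rV[R]_n) : Prop :=
  (forall z, differentiable g z) /\ continuous (fun z => 'J g z).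

Definition propertyA (R : realType) (n : nat) (f eta : 'rV[R]_n -> 'rV[R]_n) : Prop :=
  exists J Rm : 'rV[R]_n -> 'M[R]_n,
    forall z, (J z)^T = - J z /\ (Rm z)^T = Rm z /\ psd (Rm z) /\
              (f z)^T = (J z - Rm z) *m (eta z)^T.

(* Main.v *)
Require Import Defs.
From HB Require Import structures.
From mathcomp Require Import all_boot all_order all_algebra.
From mathcomp Require Import all_classical all_reals.
From mathcomp Require Import topology normedtype derive.
From mathcomp Require Import lra landau.
Import Order.TTheory GRing.Theory Num.Theory.
Import numFieldNormedType.Exports.
Local Open Scope ring_scope.
Local Open Scope classical_set_scope.
Section LinAlg.
Variable R : realType.
Variable n : nat.
Implicit Types (A B : 'M[R]_n) (x : 'cV[R]_n).

Definition quad A x := (x^T *m A *m x) 0 0.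

Lemma quad_tr A x : quad A^T x = quad A x.
Proof.
rewrite /quad; have <- : (x^T *m A *m x)^T = x^T *m A^T *m x.
  by rewrite !trmx_mul trmxK mulmxA.
by rewrite mxE.
Qed.

Lemma quadD A B x : quad (A + B) x = quad A x + quad B x.
Proof. by rewrite /quad mulmxDr mulmxDl mxE. Qed.

Lemma quadN A x : quad (- A) x = - quad A x.
Proof. by rewrite /quad mulmxN mulNmx mxE. Qed.

Lemma quadZ c A x : quad (c *: A) x = c * quad A x.
Proof. by rewrite /quad -scalemxAr -scalemxAl mxE. Qed.

Lemma quad_skew A x : A^T = - A -> quad A x = 0.
Proof.
move=> HA; have := quad_tr A x; rewrite HA quadN => /eqP.
move=> /eqP H; have : quad A x *+ 2 = 0 by rewrite mulr2n -{1}H addNr.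
by move/eqP; rewrite mulrn_eq0 /= => /eqP.
Qed.

Lemma part1 (M : 'M[R]_n) : nsd M ->
  let J := 2^-1 *: (M - M^T) in let Rm := - (2^-1 *: (M + M^T)) in
  J^T = - J /\ Rm^T = Rm /\ psd Rm /\ J - Rm = M.
Proof.
move=> HM J Rm; split; [|split; [|split]].
- by rewrite /J linearZ /= linearB /= trmxK -scalerN opprB.
- by rewrite /Rm linearN /= linearZ /= linearD /= trmxK addrC.
- move=> x; rewrite -/(quad Rm x) /Rm quadN quadZ quadD quad_tr.
  have := HM x; rewrite -/(quad M x) => Hx.
  rewrite oppr_ge0 pmulr_rle0 ?invr_gt0 ?ltr0Sn //.
  by rewrite -mulr2n mulrn_wle0.
- rewrite /J /Rm opprK -scalerDr.
  have -> : M - M^T + (M + M^T) = 2 *: M.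
    by rewrite addrACA addNr addr0 scaler_nat mulr2n.
  by rewrite scalerA mulVf ?pnatr_eq0 // scale1r.
Qed.

Lemma nsd_of_A (J Rm : 'M[R]_n) : J^T = - J -> psd Rm -> nsd (J - Rm).
Proof.
move=> HJ HR x; rewrite -/(quad _ x) quadD quad_skew // quadN add0r oppr_le0.
exact: HR.
Qed.


Definition dotv (u v : 'rV[R]_n) : R := \sum_i u 0 i * v 0 i.

Lemma dotvC u v : dotv u v = dotv v u.
Proof. by apply: eq_bigr => i _; rewrite mulrC. Qed.

Lemma dotvE u v : (u *m v^T) 0 0 = dotv u v.
Proof. by rewrite mxE; apply: eq_bigr => i _; rewrite mxE. Qed.

Lemma dotv_ge0 u : 0 <= dotv u u.
Proof. by apply: sumr_ge0 => i _; rewrite -expr2 sqr_ge0. Qed.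

Lemma dotv_eq0 u : dotv u u = 0 -> u = 0.
Proof.
move=> /eqP; rewrite psumr_eq0 => [/allP H|i _]; last by rewrite -expr2 sqr_ge0.
apply/matrixP => i j; rewrite (ord1 i) mxE.
have := H j (mem_index_enum _); rewrite -expr2 sqrf_eq0 => /eqP //.
Qed.

Lemma quad_outer (a b : 'cV[R]_n) x :
  quad (a *m b^T) x = (x^T *m a) 0 0 * (x^T *m b) 0 0.
Proof.
rewrite /quad mulmxA -mulmxA [x^T *m a]mx11_scalar mul_scalar_mx mxE; congr (_ * _).
  by rewrite [RHS]mxE eqxx mulr1n.
have <- : (x^T *m b)^T = b^T *m x by rewrite trmx_mul trmxK.
by rewrite mxE.
Qed.

Lemma Mexists (w v : 'rV[R]_n) : dotv w v <= 0 -> (w = 0 -> v = 0) ->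
  exists M : 'M[R]_n, v^T = M *m w^T /\ nsd M.
Proof.
move=> c0 w0v0; have [w0|wn0] := eqVneq w 0.
  by exists 0; rewrite w0v0 // mul0mx trmx0; split=> // x; rewrite mulmx0 mul0mx mxE.
set s := dotv w w; set c := dotv w v.
have s0 : 0 < s.
  by rewrite lt_def dotv_ge0 andbT; apply/eqP => /dotv_eq0 /eqP; rewrite (negbTE wn0).
set W := w^T; set V := v^T.
have WW : W^T *m W = s%:M by rewrite [LHS]mx11_scalar /W trmxK dotvE.
have VW : V^T *m W = c%:M by rewrite [LHS]mx11_scalar /W /V trmxK dotvE dotvC.
exists (s^-1 *: (V *m W^T - W *m V^T) + (c / s^+2) *: (W *m W^T)); split.
  rewrite mulmxDl -!scalemxAl mulmxBl -!mulmxA WW VW !mul_mx_scalar.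
  rewrite scalerBr !scalerA mulVf ?gt_eqF // scale1r -addrA.
  rewrite -scaleNr -scalerDl.
  have -> : - (s^-1 * c) + c / s ^+ 2 * s = 0.
    by rewrite expr2 invfM mulrA -mulrA mulVf ?gt_eqF // mulr1 mulrC addNr.
  by rewrite scale0r addr0.
move=> x; rewrite -/(quad _ x) quadD !quadZ quadD quadN !quad_outer.
rewrite [X in X - _]mulrC subrr mulr0 add0r.
apply: mulr_le0_ge0; last by rewrite -expr2 sqr_ge0.
by apply: mulr_le0_ge0 => //; rewrite invr_ge0 exprn_ge0 // ltW.
Qed.

End LinAlg.
Arguments dotv {R n}.

Section Deriv.
Variable R : realType.
Variable n : nat.

Lemma comp_derive (c : R -> 'rV[R]_n) (t : R) v i :
  is_derive t 1 c v -> is_derive t 1 (fun s => c s 0 i) (v 0 i).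
Proof.
move=> [dc vE]; have /derivable_mxP H := dc.
apply: DeriveDef; first exact: H.
by rewrite -vE (derive_mx dc) mxE.
Qed.

Lemma chain (F : 'rV[R]_n -> 'rV[R]_n) (c : R -> 'rV[R]_n) (t : R) v :
  differentiable F (c t) -> is_derive t 1 c v ->
  is_derive t 1 (F \o c) (v *m 'J F (c t)).
Proof.
move=> dF [dc vE]; have dc' : differentiable c t by apply/derivable1_diffP.
have dFc : differentiable (F \o c) t by apply: differentiable_comp.
apply: DeriveDef; first exact/derivable1_diffP.
rewrite deriveE // diff_comp //=.
by rewrite -(deriveE _ dc') vE -deriveE // deriveEjacobian.
Qed.

Lemma line_derive (u x : 'rV[R]_n) (t : R) : is_derive t 1 (fun s : R => s *: u + x) u.
Proof.
have H : is_diff t (fun s : R => s *: u + x) (( *:%R ^~ u) + 0).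
  exact: is_diffD.
apply: DeriveDef; first by apply/derivable1_diffP.
by rewrite deriveE // diff_val /= addr0 scale1r.
Qed.

Lemma dot_derive (c : R -> 'rV[R]_n) (t : R) v w :
  is_derive t 1 c v -> is_derive t 1 (fun s => dotv w (c s)) (dotv w v).
Proof.
move=> dc.
have -> : (fun s => dotv w (c s)) = \sum_(i < n) (fun s => w 0 i *: c s 0 i).
  by apply/funext => s; rewrite /dotv fct_sumE.
have -> : dotv w v = \sum_(i < n) w 0 i *: v 0 i by [].
apply: is_derive_sum => i.
have H := @comp_derive c t v i dc.
exact: (@is_deriveZ _ _ _ (fun s => c s 0 i) (w 0 i) t 1 (v 0 i) H).
Qed.

Lemma sq_derive (c : R -> 'rV[R]_n) (t : R) v :
  is_derive t 1 c v -> is_derive t 1 (fun s => dotv (c s) (c s)) (2 * dotv (c t) v).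
Proof.
move=> dc.
have -> : (fun s => dotv (c s) (c s)) =
   \sum_(i < n) ((fun s => c s 0 i) * (fun s => c s 0 i)).
  by apply/funext => s; rewrite /dotv fct_sumE.
have -> : 2 * dotv (c t) v =
   \sum_(i < n) (c t 0 i *: v 0 i + c t 0 i *: v 0 i).
  by rewrite /dotv mulr_sumr; apply: eq_bigr => i _; rewrite -mulr2n mulr_natl.
apply: is_derive_sum => i.
have H := @comp_derive c t v i dc.
exact: is_deriveM.
Qed.

Lemma entry_le_norm (v : 'rV[R]_n) i : `|v 0 i| <= `|v|.
Proof.
rewrite [leRHS]/Num.Def.normr /= mx_normrE.
by apply/bigmax_geP; right => /=; exists (0, i).
Qed.
Lemma norm_le_entries (v : 'rV[R]_n) c : 0 <= c -> (forall i, `|v 0 i| <= c) -> `|v| <= c.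
Proof.
move=> c0 H; rewrite [leLHS]/Num.Def.normr /= mx_normrE.
apply: bigmax_le => // -[i j] _ /=. by rewrite (ord1 i).
Qed.

Let dotv_ge0 := @dotv_ge0 R n.
Let dotv_eq0 := @dotv_eq0 R n.

Lemma dotvN (u v : 'rV[R]_n) : dotv u (- v) = - dotv u v.
Proof. by rewrite /dotv -sumrN; apply: eq_bigr => i _; rewrite mxE mulrN. Qed.

Lemma E_diff (F : 'rV[R]_n -> 'rV[R]_n) (y x : 'rV[R]_n) :
  differentiable F x -> differentiable (fun x => dotv (F x - y) (F x - y)) x.
Proof.
move=> dF.
have -> : (fun x => dotv (F x - y) (F x - y)) =
   \sum_(i < n) ((fun x => (F x - y) 0 i) * (fun x => (F x - y) 0 i)).
  by apply/funext => s; rewrite /dotv fct_sumE.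
apply: differentiable_sum => i.
have dc : differentiable (fun x => (F x - y) 0 i) x.
  apply: (@differentiable_comp _ _ _ _ (fun x => F x - y) (fun N : 'rV[R]_n => N 0 i)).
    by apply: differentiableB.
  exact: differentiable_coord.
exact: differentiableM.
Qed.

Lemma bc (a : 'rV[R]_n) r : 0 < r -> compact [set x | `|a - x| <= r].
Proof.
move=> r0; apply: bounded_closed_compact.
  exists (`|a| + r); split; first by rewrite realE; apply/orP; left; rewrite addr_ge0 // ltW.
  move=> M HM x /= Hx.
  have -> : x = a - (a - x) by rewrite opprB addrC subrK.
  apply: le_trans (ltW HM); apply: le_trans (ler_normB _ _) _.
  by rewrite lerD2l.
have -> : [set x | `|a - x| <= r] = closed_ball a r by rewrite closed_ballE.
exact: closed_ball_closed.
Qed.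
Lemma sc (a : 'rV[R]_n) r : closed [set x | `|a - x| = r].
Proof.
have -> : [set x | `|a - x| = r] = (fun x => `|a - x|) @^-1` [set r] by [].
apply: preimage_closed; last exact: closed_eq.
move=> x _; apply: continuous_comp; last exact: norm_continuous.
apply: (@continuousB _ _ _ (cst a) id); [exact: cst_continuous | by []].
Qed.

Lemma E_le (v : 'rV[R]_n) : `|v| <= 1 -> dotv v v <= n%:R * `|v|.
Proof.
move=> v1; apply: (@le_trans _ _ (\sum_(i < n) `|v|)); last first.
  by rewrite sumr_const card_ord mulr_natl.
apply: ler_sum => i _; have := entry_le_norm v i => Hi.
apply: le_trans (ler_norm _) _; rewrite normrM.
apply: le_trans (ler_wpM2l (normr_ge0 _) (le_trans Hi v1)) _.
by rewrite mulr1.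
Qed.

Lemma E_tri (u v : 'rV[R]_n) : dotv (u + v) (u + v) <= 2 * dotv u u + 2 * dotv v v.
Proof.
rewrite /dotv !mulr_sumr -big_split /=; apply: ler_sum => i _; rewrite !mxE.
have := sqr_ge0 (u 0 i - v 0 i); rewrite !expr2 => H.
lra.
Qed.

Lemma E_opp (v : 'rV[R]_n) : dotv (- v) (- v) = dotv v v.
Proof. by apply: eq_bigr => i _; rewrite !mxE mulrNN. Qed.


Lemma mentry_le_norm (B : 'M[R]_n) i j : `|B i j| <= `|B|.
Proof.
rewrite [leRHS]/Num.Def.normr /= mx_normrE.
by apply/bigmax_geP; right => /=; exists (i, j).
Qed.

Lemma mul_bound (B : 'M[R]_n) : exists2 K, 0 < K & forall x : 'rV[R]_n, `|x *m B| <= K * `|x|.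
Proof.
exists (1 + n%:R * `|B|); first by rewrite ltr_wpDr // mulr_ge0.
move=> x; apply: norm_le_entries; first by rewrite mulr_ge0 // addr_ge0 // mulr_ge0.
move=> j; rewrite mxE.
apply: le_trans (ler_norm_sum _ _ _) _.
apply: (@le_trans _ _ (\sum_(i < n) `|x| * `|B|)).
  apply: ler_sum => i _; rewrite normrM.
  by apply: ler_pM => //; [exact: entry_le_norm | exact: mentry_le_norm].
rewrite sumr_const card_ord -mulr_natr.
have hx := normr_ge0 x; have hB := normr_ge0 B; have hn : 0 <= n%:R :> R by [].
nra.
Qed.

Lemma diff_bound (F : 'rV[R]_n -> 'rV[R]_n) a (e : R) : differentiable F a -> 0 < e ->
  exists2 rho, 0 < rho & forall k, `|k| < rho ->
    `|F (k + a) - F a - k *m 'J F a| <= e * `|k|.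
Proof.
move=> dF e0.
have := diff_locally dF => /eqaddoP /(_ e e0).
move=> /nbhs_ballP [rho rho0 Hrho]; exists rho => // k Hk.
have := Hrho k; rewrite -ball_normE /= sub0r normrN => /(_ Hk).
move=> H; rewrite -deriveEjacobian // deriveE //.
by move: H => /=; rewrite opprD addrA.
Qed.

Lemma aux_unit (w : 'rV[R]_n) (A Bm : 'M[R]_n) : A \in unitmx ->
  (forall u, dotv (u *m A) (u *m Bm) <= 0) -> dotv w ((w *m invmx A) *m Bm) <= 0.
Proof. by move=> HA H; have := H (w *m invmx A); rewrite mulmxKV. Qed.

Section Core.
Variables (eta g : 'rV[R]_n -> 'rV[R]_n).
Hypotheses (deta : forall z, differentiable eta z) (etaK : cancel eta g)
  (gK : cancel g eta) (Ju : forall z, 'J eta z \in unitmx).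

Lemma interior_min x y (rho : R) : 0 < rho ->
  (forall x', `|x - x'| < rho ->
     dotv (eta x - y) (eta x - y) <= dotv (eta x' - y) (eta x' - y)) ->
  eta x = y.
Proof.
move=> rho0 Hmin.
set e := eta x - y; set J := 'J eta x.
set u := - (e *m invmx J).
pose c := fun s : R => eta (s *: u + x) - y.
have dc : forall s : R, is_derive s 1 c ((u *m 'J eta (s *: u + x)) - 0).
  move=> s.
  have H1 := (@chain eta (fun s => s *: u + x) s u (deta _) (line_derive u x s)).
  have H2 := (@is_deriveB _ _ _ (fun s : R => eta (s *: u + x)) (cst y) s 1 _ 0 H1 (is_derive_cst y s 1)).
  exact: H2.
pose psi := fun s => dotv (c s) (c s).
have dpsi : forall s : R, is_derive s 1 psi (2 * dotv (c s) ((u *m 'J eta (s *: u + x)) - 0)).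
  by move=> s; apply: sq_derive.
set r := rho / (`|u| + 1).
have r0 : 0 < r by rewrite divr_gt0 // ltr_wpDl.
have H0 : is_derive (0:R) 1 psi 0.
  apply: (@derive1_at_min _ psi (- r) r 0).
  - by rewrite ge0_cp // ltW.
  - by move=> s _; exact: (dpsi s).(ex_derive).
  - by rewrite in_itv /= oppr_lt0 r0.
  move=> s; rewrite in_itv /= => /andP[s1 s2].
  rewrite /psi /c scale0r add0r -/e; apply: Hmin.
  rewrite opprD addrCA subrr addr0 normrN normrZ.
  have ls : `|s| < r by rewrite ltr_norml s1 s2.
  apply: (@le_lt_trans _ _ (`|s| * (`|u| + 1))).
    by rewrite ler_wpM2l // lerDl.
  by rewrite -ltr_pdivlMr ?ltr_wpDl.
have := (dpsi 0).(derive_val); rewrite H0.(derive_val).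
rewrite /c scale0r add0r -/e -/J subr0 /u mulNmx mulmxKV ?Ju // (dotvN e e) => /eqP.
rewrite eq_sym mulf_eq0 pnatr_eq0 /= oppr_eq0 => /eqP /dotv_eq0 /eqP.
by rewrite subr_eq0 => /eqP.
Qed.

Let E (v : 'rV[R]_n) := dotv v v.

Lemma eta_inj : injective eta.
Proof. exact: can_inj etaK. Qed.

Lemma g_cont y0 : {for y0, continuous g}.
Proof.
rewrite /continuous_at; apply/(@cvgrPdist_lt _ _ _ _ (nbhs_filter y0)) => e e0.
set a := g y0; set r := e / 2.
have r0 : 0 < r by rewrite divr_gt0.
have re : r < e by rewrite /r ltr_pdivrMr // ltr_pMr // ltr1n.
pose S := [set x | `|a - x| = r].
pose Bc := [set x | `|a - x| <= r].
have cBc : compact Bc by exact: bc.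
have cS : compact S.
  apply: (subclosed_compact (sc a r) cBc) => x /= Hx; by rewrite /Bc /= Hx.
have hcont : forall y, continuous (fun x => E (eta x - y)).
  by move=> y z; apply: differentiable_continuous; apply: E_diff.
have [m [m0 Hm]] : exists m, 0 < m /\ forall x, S x -> m <= E (eta x - y0).
  case: (pselect (S !=set0)) => [Sne|S0]; last first.
    exists 1; split => // x Sx; exfalso; apply: S0; by exists x.
  have [c cS' cmin] := EVT_min_rV Sne cS (continuous_subspaceT (hcont y0)).
  exists (E (eta c - y0)); split; last first.
    by move=> x Sx; apply: cmin; rewrite inE.
  rewrite lt_def dotv_ge0 andbT; apply/eqP => /dotv_eq0 /eqP.
  rewrite subr_eq0 /a -{1}(gK y0) => /eqP /eta_inj ca.
  move: cS'; rewrite inE /S /= ca subrr normr0 => r0'.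
  by move: r0; rewrite -r0' ltxx.
set d := Num.min 1 (m / (4 * (n%:R + 1))).
have n1 : 0 < n%:R + 1 :> R by rewrite ltr_wpDl.
have d0 : 0 < d by rewrite lt_min ltr01 /= divr_gt0 // mulr_gt0.
apply/nbhs_ballP; exists d => //= y; rewrite -ball_normE /= => Hy.
have Ey : E (y - y0) < m / 4.
  rewrite distrC in Hy.
  have Hy1 : `|y - y0| <= 1 by apply: ltW; apply: lt_le_trans Hy _; rewrite ge_min lexx.
  rewrite /E; apply: le_lt_trans (E_le _ Hy1) _.
  apply: (@le_lt_trans _ _ ((n%:R + 1) * `|y - y0|)).
    by rewrite ler_wpM2r // lerDl.
  apply: (@lt_le_trans _ _ ((n%:R + 1) * d)); first by rewrite ltr_pM2l.
  by rewrite -ler_pdivlMl // mulrC /d ge_min -mulrA -invfM lexx orbT.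
have Bne : Bc !=set0 by exists a; rewrite /Bc /= subrr normr0 ltW.
have [xs xsB xsmin] := EVT_min_rV Bne cBc (continuous_subspaceT (hcont y)).
move: xsB; rewrite inE /Bc /= => xsB.
have xsin : `|a - xs| < r.
  rewrite lt_neqAle xsB andbT; apply/negP => /eqP xsS.
  have := Hm xs xsS.
  have H1 : E (eta xs - y0) <= 2 * E (eta xs - y) + 2 * E (y - y0).
    have -> : eta xs - y0 = (eta xs - y) + (y - y0) by rewrite addrA subrK.
    exact: E_tri.
  have H2 : E (eta xs - y) <= E (y - y0).
    have := xsmin a; rewrite inE /Bc /= subrr normr0 (ltW r0) /a gK => /(_ isT).
    by rewrite /E -(E_opp (y - y0)) opprB.
  move=> H3; have : m < m.
    apply: le_lt_trans H3 _; apply: le_lt_trans H1 _.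
    have : 2 * E (eta xs - y) + 2 * E (y - y0) <= 4 * E (y - y0).
      by move: H2; lra.
    move=> H4; apply: le_lt_trans H4 _.
    by move: Ey; lra.
  by rewrite ltxx.
have etaxs : eta xs = y.
  apply: (@interior_min xs y (r - `|a - xs|)); first by rewrite subr_gt0.
  move=> x' Hx'; apply: xsmin; rewrite inE /Bc /=.
  apply: ltW; apply: le_lt_trans (ler_distD xs a x') _.
  by rewrite -ltrBrDl.
by rewrite -etaxs etaK (le_lt_trans _ re) // ltW.
Qed.


Lemma g_derive (w : 'rV[R]_n) (t : R) :
  is_derive t 1 (fun s : R => g (s *: w)) (w *m invmx ('J eta (g (t *: w)))).
Proof.
set y1 := t *: w; set a := g y1; set A := 'J eta a; set B := invmx A.
set v := w *m B.
have [K K0 HK] := mul_bound B.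
have AB : forall x : 'rV[R]_n, x *m A *m B = x by move=> x; rewrite mulmxK ?Ju.
suff Hc : (fun h : R => h^-1 *: ((fun s : R => g (s *: w)) (h *: 1 + t) - g (t *: w)))
    @ 0^' --> v.
  by apply: DeriveDef; [apply/cvg_ex; exists v | apply: cvg_lim].
apply/cvgrPdist_lt => e e0.
set dl := Num.min (1 / (2 * K)) (e / (4 * K * (`|v| + 1))).
have v1 : 0 < `|v| + 1 by rewrite ltr_wpDl.
have dl0 : 0 < dl by rewrite lt_min !divr_gt0 // !mulr_gt0.
have [rho rho0 Hrho] := @diff_bound eta a dl (deta a) dl0.
move: (g_cont y1) => /(@cvgrPdist_lt _ _ _ _ (nbhs_filter y1)) /(_ rho rho0).
move=> /nbhs_ballP [sg sg0 Hsg].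
have w1 : 0 < `|w| + 1 by rewrite ltr_wpDl.
near=> h.
have hn0 : h != 0 by near: h; exact: nbhs_dnbhs_neq.
have hs : `|h| < sg / (`|w| + 1) by near: h; apply: dnbhs0_lt; rewrite divr_gt0.
have -> : h *: (1:R) = h by rewrite -[h *: 1]/(h * 1) mulr1.
have -> : (h + t) *: w = h *: w + y1 by rewrite /y1 scalerDl.
rewrite -/y1 -/a.
set d := g (h *: w + y1) - a.
have hd : `|d| < rho.
  rewrite /d distrC; apply: Hsg; rewrite -ball_normE /=.
  rewrite opprD addrCA subrr addr0 normrN normrZ.
  rewrite -(ltr_pM2r w1) divfK ?gt_eqF // in hs.
  by apply: le_lt_trans hs; rewrite ler_wpM2l // lerDl.
have etaa : eta a = y1 by rewrite /a gK.
set r := h *: w - d *m A.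
have Hr : `|r| <= dl * `|d|.
  have := Hrho d hd; rewrite /d subrK gK etaa.
  by rewrite addrK.
have dE : d = h *: v - r *m B.
  by rewrite /r mulmxBl AB -scalemxAl -/v opprB addrC subrK.
have K2 : K * dl <= 1 / 2.
  rewrite -ler_pdivlMl // /dl ge_min; apply/orP; left.
  by rewrite !mul1r invfM mulrC.
have hd0 := normr_ge0 d.
have dbound : `|d| <= 2 * (`|h| * `|v|).
  have H1 : `|d| <= `|h| * `|v| + K * (dl * `|d|).
    rewrite {1}dE; apply: le_trans (ler_normB _ _) _.
    rewrite normrZ lerD2l; apply: le_trans (HK r) _.
    by rewrite ler_wpM2l // ltW.
  have H2 : K * (dl * `|d|) <= `|d| / 2.
    by rewrite mulrA; nra.
  lra.
have -> : v - h^-1 *: d = h^-1 *: (r *m B).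
  by rewrite dE scalerBr scalerA mulVf // scale1r opprB addrC subrK.
rewrite normrZ normfV.
have hpos : 0 < `|h| by rewrite normr_gt0.
rewrite -ltr_pdivlMl ?invr_gt0 // invrK.
apply: (@le_lt_trans _ _ (K * (dl * `|d|))).
  by apply: le_trans (HK r) _; rewrite ler_wpM2l // ltW.
apply: (@le_lt_trans _ _ (K * (dl * (2 * (`|h| * `|v|))))).
  by rewrite ler_pM2l // ler_pM2l.
have dl2 : dl <= e / (4 * K * (`|v| + 1)) by rewrite ge_min lexx orbT.
rewrite ler_pdivlMr ?mulr_gt0 // in dl2.
have hv := normr_ge0 v.
have H3 : `|h| * (dl * (4 * K * (`|v| + 1))) <= `|h| * e by rewrite ler_pM2l.
have H4 : 0 <= K * dl * `|h| by rewrite !mulr_ge0 // ltW.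
nra.
Unshelve. all: by end_near.
Qed.




Lemma core (f : 'rV[R]_n -> 'rV[R]_n) (df : forall z, differentiable f z)
  (Hq : forall z u, dotv (u *m 'J eta z) (u *m 'J f z) <= 0)
  (H0 : forall z, eta z = 0 -> f z = 0) z : dotv (eta z) (f z) <= 0.
Proof.
set w := eta z.
pose phi := fun s : R => dotv w (f (g (s *: w))).
have dphi : forall s : R, is_derive s 1 phi
   (dotv w ((w *m invmx ('J eta (g (s *: w)))) *m 'J f (g (s *: w)))).
  move=> s; apply: (@dot_derive (f \o (fun s : R => g (s *: w)))).
  apply: (@chain f (fun s : R => g (s *: w))); first exact: df.
  exact: g_derive.
have dle : forall s : R, 'D_1 phi s <= 0.
  move=> s; rewrite (dphi s).(derive_val).
  exact: (aux_unit w _ _ (Ju _) (Hq _)).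
have der : forall x : R, derivable phi x 1 by move=> x; exact: (dphi x).(ex_derive).
have dle1 : forall x, phi^`() x <= 0 by move=> x; rewrite derive1E; exact: dle.
have cphi : {within `[0, 1], continuous phi}.
  by apply: derivable_within_continuous => x _; exact: der.
have := @ler0_derive1_nincr R phi 0 1 (fun x _ => der x)
  (fun x _ => dle1 x) cphi 0 1 (lexx _) ler01 (lexx _).
rewrite /phi scale1r scale0r /w etaK.
have -> : f (g 0) = 0 by apply: H0; rewrite gK.
suff -> : dotv (eta z) 0 = 0 by [].
by rewrite /dotv big1 // => i _; rewrite mxE mulr0.
Qed.

End Core.
End Deriv.

Lemma Hq_of (R : realType) (n : nat) (A Bm : 'M[R]_n) (u : 'rV[R]_n) :
  A \in unitmx -> nsd (Bm^T *m invmx A^T) -> dotv (u *m A) (u *m Bm) <= 0.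
Proof.
move=> HA H; have := H ((u *m A)^T); rewrite trmxK.
have -> : (u *m A)^T = A^T *m u^T by rewrite trmx_mul.
rewrite !mulmxA mulmxKV ?unitmx_tr // -mulmxA -trmx_mul dotvE //.
Qed.

Theorem mainTheorem3 (R : realType) (n : nat) (n_gt0 : (0 < n)%N)
  (H : 'rV[R]_n -> R) (eta f : 'rV[R]_n -> 'rV[R]_n)
  (HC1 : C1_scalar H) (Hge0 : forall z, 0 <= H z)
  (etaE : forall z, eta z = gradient H z) :
  (propertyA f eta <->
     exists M : 'rV[R]_n -> 'M[R]_n,
       forall z, (f z)^T = M z *m (eta z)^T /\ nsd (M z))
  /\
  (C1_map f -> C1_map eta -> bijective eta ->
   (forall z, eta z = 0 -> f z = 0) ->
   (forall z, Jac eta z \in unitmx) ->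
   (forall z, nsd (Jac f z *m invmx (Jac eta z))) ->
   propertyA f eta).
Proof.
have part1iff : propertyA f eta <-> exists M : 'rV[R]_n -> 'M[R]_n,
       forall z, (f z)^T = M z *m (eta z)^T /\ nsd (M z).
  split.
  - case=> J [Rm HJR]; exists (fun z => J z - Rm z) => z.
    have [HJ [HR [Hp Hf]]] := HJR z; split => //; exact: (@nsd_of_A R n _ _ HJ Hp).
  - case=> M HM; exists (fun z => 2^-1 *: (M z - (M z)^T)).
    exists (fun z => - (2^-1 *: (M z + (M z)^T))) => z.
    have [Hf Hn] := HM z; have [h1 [h2 [h3 h4]]] := @part1 R n (M z) Hn.
    by do !split => //; rewrite h4.
split => //.
move=> [df _] [deta _] [g etaK gK] H0 Ju Hnsd.
apply/part1iff.
have Ju' : forall z, 'J eta z \in unitmx by move=> z; rewrite -unitmx_tr; exact: Ju z.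
have Hq : forall z u, dotv (u *m 'J eta z) (u *m 'J f z) <= 0.
  by move=> z u; apply: Hq_of (Ju' z) (Hnsd z).
have Hc := @core R n eta g deta etaK gK Ju' f df Hq H0.
have [Mf HMf] := @boolp.choice _ _ (fun z (M : 'M[R]_n) => (f z)^T = M *m (eta z)^T /\ nsd M)
  (fun z => @Mexists R n (eta z) (f z) (Hc z) (H0 z)).
by exists Mf.
Qed.
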